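(* There exist absolute constants $c>0$ and $n_0$ such that the following holds for every $n\ge n_0$ that is a power of $2$. Let $L=\log_2 n$ and let $T_1,\dots,T_n$ be drawn independently and uniformly at random from the $L$-element subsets of $[n]$. For $x\in\{0,1\}^n$ let $N_T(x) := \#\{ i\in[n] : x_j = 1 \text{ for all } j\in T_i\}$. Then $\mathbb{E}_{T_1,\dots,T_n}\Big[\Pr_{\mathbf{x}\sim\{0,1\}^n}[N_T(\mathbf{x}) = 1]\Big] \ge c$, where $\mathbf{x}$ is uniform on $\{0,1\}^n$. In particular, there exists a choice of $T_1,\dots,T_n$ with $\Pr_{\mathbf{x}}[N_T(\mathbf{x})=1]\ge c$. *)

(* Defs.v *)
From mathcomp Require Import all_boot all_order all_algebra.
Set Implicit Arguments. Unset Strict Implicit. Unset Printing Implicit Defensive.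
Import Order.TTheory GRing.Theory Num.Theory.
Local Open Scope ring_scope.

Definition NT (n : nat) (T : {ffun 'I_n -> {set 'I_n}}) (x : {ffun 'I_n -> bool}) : nat :=
  #|[set i : 'I_n | [forall j in T i, x j]]|.

(* All families (T_1,...,T_n) of L-element subsets of [n]; drawing the T_i
   independently and uniformly = drawing a family uniformly from this set. *)
Definition families (n L : nat) : {set {ffun 'I_n -> {set 'I_n}}} :=
  [set T : {ffun 'I_n -> {set 'I_n}} | [forall i, #|T i| == L]].

Definition probN1 (n : nat) (T : {ffun 'I_n -> {set 'I_n}}) : rat :=
  (#|[set x : {ffun 'I_n -> bool} | NT T x == 1%N]|)%:R / (2 ^ n)%:R.

Definition expectN1 (n L : nat) : rat :=
  (\sum_(T in families n L) probN1 T) / (#|families n L|)%:R.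

(* Main.v *)
Require Import Defs.
From mathcomp Require Import all_boot all_order all_algebra.
From mathcomp Require Import lra ring zify.
Import Order.TTheory GRing.Theory Num.Theory.
Set Implicit Arguments. Unset Strict Implicit. Unset Printing Implicit Defensive.
Local Open Scope ring_scope.


Lemma sum_ind (T : finType) (A : {pred T}) : \sum_i (i \in A : nat) = #|A|.
Proof. rewrite -sum1_card [RHS]big_mkcond; apply: eq_bigr => i _; by case: (i \in A). Qed.

Definition kx n (x : {ffun 'I_n -> bool}) := #|[set j | x j]|.
Definition sg (b : bool) : rat := if b then 1 else -1.
Definition flip n (j : 'I_n) (x : {ffun 'I_n -> bool}) : {ffun 'I_n -> bool} :=
  [ffun t => if t == j then ~~ x t else x t].

Lemma flipK n (j : 'I_n) : involutive (flip j).
Proof. by move=> x; apply/ffunP => t; rewrite !ffunE; case: (t == j); rewrite ?negbK. Qed.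

Lemma kx_sum n (x : {ffun 'I_n -> bool}) :
  (2 * kx x)%N%:R - n%:R = \sum_i sg (x i).
Proof.
rewrite /kx -sum_ind natrM natr_sum mulr_sumr.
have -> : (n%:R : rat) = \sum_(i < n) 1 by rewrite sumr_const card_ord.
rewrite -sumrB; apply: eq_bigr => i _; rewrite inE /sg; case: (x i) => /=; lra.
Qed.

Lemma moment n :
  \sum_(x : {ffun 'I_n -> bool}) ((2 * kx x)%N%:R - n%:R) ^+ 2 = (n * 2 ^ n)%:R :> rat.
Proof.
under eq_bigr => x _ do rewrite kx_sum expr2 big_distrlr /=.
rewrite exchange_big /=.
under eq_bigr => i _ do rewrite exchange_big /=.
have cardF : #|{ffun 'I_n -> bool}| = (2 ^ n)%N by rewrite card_ffun card_bool card_ord.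
rewrite (eq_bigr (fun _ => (2 ^ n)%:R)).
  by rewrite sumr_const card_ord natrM mulr_natl.
move=> i _; rewrite (bigD1 i) //= [X in _ + X]big1 ?addr0.
  rewrite (eq_bigr (fun _ => 1)) ?sumr_const ?cardF //.
  by move=> x _; rewrite /sg; case: (x i); lra.
move=> j ji.
set S := \sum_x _.
have : S = - S.
  rewrite {1}/S (reindex_inj (inv_inj (@flipK n j))) /S -sumrN.
  have ij : (i == j) = false by rewrite eq_sym (negbTE ji).
  apply: eq_bigr => x _; rewrite !ffunE eqxx ij /sg.
  by case: (x i); case: (x j) => /=; lra.
lra.
Qed.

Definition negx n (x : {ffun 'I_n -> bool}) : {ffun 'I_n -> bool} := [ffun t => ~~ x t].
Lemma negxK n : involutive (@negx n).
Proof. by move=> x; apply/ffunP => t; rewrite !ffunE negbK. Qed.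

Lemma kx_neg n (x : {ffun 'I_n -> bool}) : (kx (negx x) + kx x = n)%N.
Proof.
rewrite /kx -[X in (_ = X)%N](card_ord n) -(cardsC [set j | x j]) addnC; congr (_ + _)%N.
by apply: eq_card => j; rewrite !inE ffunE.
Qed.

Lemma half_mass n : (2 ^ n <= 2 * #|[set x : {ffun 'I_n -> bool} | (n <= 2 * kx x)%N]|)%N.
Proof.
set Hi := [set x : {ffun 'I_n -> bool} | (n <= 2 * kx x)%N].
have e : (#|Hi| + #|~: Hi| = 2 ^ n)%N by rewrite cardsC card_ffun card_bool card_ord.
have sub : ((@negx n) @: ~: Hi) \subset Hi.
  apply/subsetP => y /imsetP [x]; rewrite !inE -ltnNge => hx ->.
  have := kx_neg x; lia.
have := subset_leq_card sub; rewrite card_imset; last exact: inv_inj (@negxK n).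
lia.
Qed.

Lemma tail n L : (0 < n)%N ->
  n%:R * #|[set x : {ffun 'I_n -> bool} | (n < 2 * L * (2 * kx x - n))%N]|%:R
   <= 4 * L%:R ^+ 2 * (2 ^ n)%:R :> rat.
Proof.
move=> n0.
set Bad := [set x : {ffun 'I_n -> bool} | _].
set nr := (n%:R : rat); set Lr := (L%:R : rat).
have nr0 : 0 < nr by rewrite ltr0n.
have h1 : \sum_(x in Bad) nr ^+ 2 <= \sum_(x in Bad) 4 * Lr ^+ 2 * ((2 * kx x)%N%:R - nr) ^+ 2.
  apply: ler_sum => x; rewrite inE => hx.
  have hk : (n < 2 * kx x)%N.
    move: hx; generalize (kx x) => m hx; clear -hx; nia.
  have : nr < 2 * Lr * ((2 * kx x)%N%:R - nr).
    have hr : (n%:R : rat) < (2 * L * (2 * kx x - n))%N%:R by rewrite ltr_nat; exact hx.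
    rewrite natrM (natrB _ (ltnW hk)) natrM in hr; exact hr.
  set d := (_ - nr); move=> h.
  have : nr ^+ 2 <= (2 * Lr * d) ^+ 2.
    rewrite lerXn2r ?nnegrE; [done | exact: ltW nr0 | exact: ltW (lt_trans nr0 h) | exact: ltW h].
  have -> : (2 * Lr * d) ^+ 2 = 4 * Lr ^+ 2 * d ^+ 2 by ring.
  move=> h'; exact h'.
have h2 : (\sum_(x in Bad) 4 * Lr ^+ 2 * ((2 * kx x)%N%:R - nr) ^+ 2)
    <= (\sum_(x : {ffun 'I_n -> bool}) 4 * Lr ^+ 2 * ((2 * kx x)%N%:R - nr) ^+ 2).
  rewrite big_mkcond /=; apply: ler_sum => x _; case: (x \in Bad); first exact: lexx.
  apply: mulr_ge0; [apply: mulr_ge0; [done | apply: sqr_ge0] | apply: sqr_ge0].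
have h3 : (\sum_(x : {ffun 'I_n -> bool}) 4 * Lr ^+ 2 * ((2 * kx x)%N%:R - nr) ^+ 2)
   = 4 * Lr ^+ 2 * (n * 2 ^ n)%N%:R by rewrite -mulr_sumr /nr moment.
rewrite h3 in h2.
rewrite sumr_const in h1.
have h := le_trans h1 h2.
set c := (#|Bad|%:R : rat); set t := ((2 ^ n)%:R : rat).
have e1 : nr ^+ 2 *+ #|Bad| = nr * (nr * c) by rewrite -mulr_natr /c expr2 mulrA.
have e2 : 4 * Lr ^+ 2 * (n * 2 ^ n)%:R = nr * (4 * Lr ^+ 2 * t) by rewrite natrM /t -/nr; ring.
rewrite e1 e2 in h.
by rewrite -(ler_pM2l nr0).
Qed.


Lemma bern (y : rat) (m : nat) : 0 <= y -> y <= 1 -> 1 - m%:R * y <= (1 - y) ^+ m.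
Proof.
move=> y0 y1; elim: m => [|m IH]; first by rewrite mul0r subr0 expr0.
rewrite exprS -natr1.
have h : (1 - m%:R * y) * (1 - y) <= (1 - y) * (1 - y) ^+ m.
  by rewrite mulrC ler_wpM2l // subr_ge0.
have m0 : 0 <= (m%:R : rat) by [].
nra.
Qed.

Lemma pow16 (m : nat) (p : rat) : (0 < m)%N -> 0 <= p -> 2 * m%:R * p <= 1 ->
  1/16 <= (1 - p) ^+ (4 * m).
Proof.
move=> m0 p0 hp.
have p1 : p <= 1.
  have : 1 <= (m%:R : rat) by rewrite ler1n.
  nra.
have h := @bern p m p0 p1.
have h2 : 1/2 <= (1 - p) ^+ m by lra.
rewrite mulnC exprM.
have -> : (1/16 : rat) = (1/2) ^+ 4 by rewrite !exprS expr0; lra.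
rewrite lerXn2r // ?nnegrE //; lra.
Qed.

Lemma cnt_bound (m a b : nat) : (0 < m)%N -> (0 < b)%N -> (a <= b)%N ->
  b%:R <= 2 * (4 * m)%:R * a%:R :> rat -> (4 * m)%:R * a%:R <= 2 * b%:R :> rat ->
  b%:R ^+ (4 * m) / 32 <= (4 * m)%:R * a%:R * (b - a)%:R ^+ (4 * m).-1 :> rat.
Proof.
move=> m0 b0 ab h1 h2.
set n := (4 * m)%N in h1 h2 *.
have bpos : 0 < (b%:R : rat) by rewrite ltr0n.
set p := (a%:R / b%:R : rat).
have ea : (a%:R : rat) = p * b%:R by rewrite /p mulfVK // gt_eqF.
have p0 : 0 <= p by rewrite /p divr_ge0.
have hp : 2 * m%:R * p <= 1.
  rewrite /p mulrA ler_pdivrMr // mul1r; move: h2; rewrite /n natrM; lra.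
have p1 : p <= 1.
  have : 1 <= (m%:R : rat) by rewrite ler1n.
  nra.
have e1 : ((b - a)%:R : rat) = b%:R * (1 - p) by rewrite natrB // ea; ring.
have hn : n = (n.-1).+1 by rewrite /n; move: m0; clear; case: m.
have P16 := @pow16 m p m0 p0 hp.
have q0 : 0 <= (1 - p) ^+ n.-1 by apply: exprn_ge0; lra.
have P16' : 1/16 <= (1 - p) ^+ n.-1.
  apply: (le_trans P16); rewrite -/n {1}hn exprSr.
  have : 0 <= 1 - p by lra.
  nra.
rewrite e1 exprMn {1}hn exprS.
have bn0 : 0 <= (b%:R : rat) ^+ n.-1 by apply: exprn_ge0; lra.
have hna : b%:R / 2 <= n%:R * a%:R :> rat by lra.
set B := (b%:R : rat) ^+ n.-1 in bn0 *.
set Q := (1 - p) ^+ n.-1 in q0 P16' *.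
have h5 : (b%:R / 2) * (B * (1/16)) <= (b%:R / 2) * (B * Q).
  by apply: ler_wpM2l; [lra | apply: ler_wpM2l].
have : b%:R * B / 32 <= (b%:R / 2) * (B * Q).
  have -> : b%:R * B / 32 = (b%:R / 2) * (B * (1/16)) by field.
  exact: h5.
have : (b%:R / 2) * (B * Q) <= n%:R * a%:R * (B * Q).
  by apply: ler_wpM2r => //; apply: mulr_ge0.
move=> h3 h4; apply: (le_trans h4); apply: (le_trans h3); rewrite mulrA; lra.
Qed.

Lemma prod_pos (n L : nat) : (L <= n)%N -> 0 < \prod_(j < L) ((n - j)%:R : rat).
Proof.
move=> Ln; rewrite prodr_gt0 // => j _; rewrite ltr0n subn_gt0.
exact: leq_trans (ltn_ord j) Ln.
Qed.

Lemma lower (n k L : nat) : (n <= 2 * k)%N -> (2 * L * L + L < n)%N -> n = (2 ^ L)%N ->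
  \prod_(j < L) ((n - j)%:R : rat) <= 2 * n%:R * \prod_(j < L) ((k - j)%:R : rat).
Proof.
move=> hk hL hn.
have Ln : (L < n)%N by apply: leq_ltn_trans hL; rewrite leq_addl.
have Lk : (L <= k)%N by nia.
set nr := (n%:R : rat); set Lr := (L%:R : rat); set kr := (k%:R : rat).
have hLn : Lr < nr by rewrite ltr_nat.
have hkr : nr <= 2 * kr by rewrite -natrM ler_nat.
have hLr : 2 * Lr * Lr + Lr <= nr by rewrite -natrM -natrM -natrD ler_nat ltnW.
have L0 : 0 <= Lr by [].
have h2L : 2 * Lr <= nr by rewrite -natrM ler_nat; nia.
set c := (nr - 2 * Lr) / (2 * (nr - Lr)).
have c0 : 0 <= c by rewrite /c divr_ge0 //; nra.
have step : \prod_(j < L) (c * (n - j)%:R) <= \prod_(j < L) ((k - j)%:R : rat).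
  apply: ler_prod => j _; have jL := ltn_ord j.
  have jr : (j%:R : rat) <= Lr by rewrite ler_nat ltnW.
  have j0 : 0 <= (j%:R : rat) by [].
  rewrite !natrB; [|exact: leq_trans (ltnW jL) Lk|exact: leq_trans (ltnW jL) (ltnW Ln)].
  apply/andP; split; first by apply: mulr_ge0 => //; rewrite -/nr; nra.
  rewrite /c mulrAC ler_pdivrMr; last by rewrite -/nr -/Lr; nra.
  rewrite -/nr -/kr; nra.
rewrite big_split /= prodr_const card_ord in step.
set P := \prod_(j < L) _ in step *.
have P0 : 0 < P by apply: prod_pos; exact: ltnW.
have hc : 1/2 <= (2 * c) ^+ L.
  have y0 : 0 <= Lr / (nr - Lr) by apply: divr_ge0 => //; lra.
  have y1 : Lr / (nr - Lr) <= 1 by rewrite ler_pdivrMr; lra.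
  have := @bern _ L y0 y1.
  have e2 : (1 - Lr / (nr - Lr) : rat) = 2 * c.
    rewrite /c; field; by rewrite subr_eq0 gt_eqF.
  rewrite e2.
  have : Lr * (Lr / (nr - Lr)) <= 1/2.
    rewrite mulrA ler_pdivrMr; lra.
  rewrite -/Lr; lra.
have en : nr = 2 ^+ L by rewrite /nr hn natrX.
have : P <= 2 * nr * (c ^+ L * P).
  rewrite mulrA -(mulrA 2) en -exprMn (mulrC 2 c).
  have : P / 2 <= (c * 2) ^+ L * P.
    have -> : P / 2 = (1/2) * P by field.
    by apply: ler_wpM2r; [lra | rewrite (mulrC c 2)].
  lra.
move=> h; apply: (le_trans h); apply: ler_wpM2l => //; lra.
Qed.

Lemma upper (n k L : nat) : (k <= n)%N -> (n <= 2 * k)%N -> (2 * L * (2 * k - n) <= n)%N ->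
  n = (2 ^ L)%N -> (L <= k)%N ->
  n%:R * \prod_(j < L) ((k - j)%:R : rat) <= 2 * \prod_(j < L) ((n - j)%:R : rat).
Proof.
move=> kn hk hL hn Lk.
have Ln : (L <= n)%N by apply: leq_trans Lk kn.
have n0 : (0 < n)%N by rewrite hn expn_gt0.
set nr := (n%:R : rat); set Lr := (L%:R : rat); set kr := (k%:R : rat).
have nr0 : 0 < nr by rewrite ltr0n.
have hkn : kr <= nr by rewrite ler_nat.
have hkr : nr <= 2 * kr by rewrite -natrM ler_nat.
have hLr : 2 * Lr * (2 * kr - nr) <= nr.
  by rewrite -[2 * kr]natrM -natrB // -!natrM ler_nat.
have L0 : 0 <= Lr by [].
have step : \prod_(j < L) ((k - j)%:R : rat) <= \prod_(j < L) ((kr / nr) * (n - j)%:R).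
  apply: ler_prod => j _; have jL := ltn_ord j.
  have jr : (j%:R : rat) <= Lr by rewrite ler_nat ltnW.
  have j0 : 0 <= (j%:R : rat) by [].
  have jk : (j%:R : rat) <= kr by rewrite ler_nat; exact: leq_trans (ltnW jL) Lk.
  rewrite !natrB; [|exact: leq_trans (ltnW jL) Ln|exact: leq_trans (ltnW jL) Lk].
  apply/andP; split; first by rewrite -/kr subr_ge0.
  rewrite mulrAC ler_pdivlMr // -/nr -/kr; nra.
rewrite big_split /= prodr_const card_ord in step.
set P := \prod_(j < L) ((n - j)%:R : rat) in step *.
have P0 : 0 < P by apply: prod_pos.
set z := (2 * kr - nr) / nr.
have z0 : 0 <= z by apply: divr_ge0; lra.
have z1 : z <= 1 by rewrite ler_pdivrMr; lra.
have Lz : Lr * z <= 1/2 by rewrite mulrA ler_pdivrMr; lra.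
have B := @bern _ L z0 z1.
have Q0 : 0 <= (1 + z) ^+ L by apply: exprn_ge0; lra.
have prodle : (1 + z) ^+ L * (1 - z) ^+ L <= 1.
  rewrite -exprMn; apply: exprn_ile1; nra.
have h2 : (1 + z) ^+ L <= 2.
  set A := (1 + z) ^+ L in Q0 prodle *; set C := (1 - z) ^+ L in B prodle *.
  rewrite -/Lr in B; nra.
have en : nr * (kr / nr) ^+ L = (1 + z) ^+ L.
  have e2 : nr = 2 ^+ L by rewrite /nr hn natrX.
  rewrite {1}e2 -exprMn; congr (_ ^+ _); rewrite /z; field.
  by rewrite gt_eqF.
have : nr * ((kr / nr) ^+ L * P) <= 2 * P.
  by rewrite mulrA en; apply: ler_wpM2r => //; lra.
move=> h; apply: le_trans h; apply: ler_wpM2l => //; lra.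
Qed.

Lemma ratio_lo (a b n P K : rat) : 0 < P -> 0 <= b -> a * P = b * K -> P <= 2 * n * K -> b <= 2 * n * a.
Proof.
move=> P0 b0 e h.
have h1 : b * P <= b * (2 * n * K) by apply: ler_wpM2l.
have e2 : b * (2 * n * K) = (2 * n * a) * P by transitivity (2 * n * (b * K)); [ring | rewrite -e; ring].
by rewrite e2 ler_pM2r in h1.
Qed.
Lemma ratio_hi (a b n P K : rat) : 0 < P -> 0 <= b -> a * P = b * K -> n * K <= 2 * P -> n * a <= 2 * b.
Proof.
move=> P0 b0 e h.
have h1 : b * (n * K) <= b * (2 * P) by apply: ler_wpM2l.
have e2 : b * (n * K) = (n * a) * P by transitivity (n * (b * K)); [ring | rewrite -e; ring].
have e3 : b * (2 * P) = (2 * b) * P by ring.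
by rewrite e2 e3 ler_pM2r in h1.
Qed.
Lemma pow_big L : (12 <= L)%N -> (16 * L * L <= 2 ^ L)%N.
Proof.
elim: L => [|L IH] hL //.
move: hL; rewrite leq_eqVlt => /orP[/eqP <- // | hL].
rewrite expnS; move: (IH hL); move: hL; generalize (2 ^ L)%N => t; nia.
Qed.


Notation Sx x := [set j | x j].
Notation BsD n L := [set B : {set 'I_n} | #|B| == L].
Notation AsD n L x := [set B : {set 'I_n} | B \subset Sx x & #|B| == L].

Section Count.
Local Open Scope nat_scope.
Variables (n L : nat) (x : {ffun 'I_n -> bool}).
Local Notation S := (Sx x).
Local Notation Bs := (BsD n L).
Local Notation As := (AsD n L x).
Let Fi (i0 : 'I_n) := fun i : 'I_n => if i == i0 then As else Bs :\: As.

Lemma NT_sub T : NT T x = #|[set i | T i \subset S]|.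
Proof.
rewrite /NT; apply: eq_card => i; rewrite !inE.
apply/forall_inP/subsetP => H j /H; by rewrite ?inE.
Qed.

Lemma card1_sum (P : pred 'I_n) :
  (#|[set i | P i]| == 1%N) = (\sum_i0 [forall i, P i == (i == i0)] :> nat) :> nat.
Proof.
case: (boolP (#|[set i | P i]| == 1%N)) => [/cards1P [i1 Hi1] | H].
  rewrite (bigD1 i1) //= big1 ?addn0.
    suff -> : [forall i, P i == (i == i1)] by [].
    apply/forallP => i.
    by have := congr1 (fun A : {set 'I_n} => i \in A) Hi1; rewrite !inE => ->.
  move=> i0 ne; apply/eqP; rewrite eqb0; apply/negP => /forallP Hf.
  have := Hf i1; have := congr1 (fun A : {set 'I_n} => i1 \in A) Hi1; rewrite !inE eqxx /= => -> /eqP.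
  by move=> /esym/eqP E; move: ne; rewrite E eqxx.
rewrite big1 // => i0 _; apply/eqP; rewrite eqb0; apply/negP => /forallP Hf.
move: H; suff -> : [set i | P i] = [set i0] by rewrite cards1.
by apply/setP => i; rewrite !inE; apply/eqP/Hf.
Qed.

Lemma count_x :
  #|[set T in families n L | NT T x == 1%N]| = (n * #|As| * (#|Bs| - #|As|) ^ n.-1)%N.
Proof.
have AB : As \subset Bs by apply/subsetP => B; rewrite !inE => /andP[].
have pt T : ((T \in [set T in families n L | NT T x == 1%N]) : nat)
   = \sum_i0 (T \in family (Fi i0) : nat).
  rewrite inE /families inE NT_sub.
  case: (boolP [forall i, #|T i| == L]) => [/forallP HL | /forallPn [i Hi]] /=.
    rewrite card1_sum; apply: eq_bigr => i0 _; congr nat_of_bool.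
    apply/forallP/familyP => H i; have := H i; rewrite /Fi;
      case: (i == i0); rewrite !inE ?HL ?andbT ?andbF //=.
    1-4: by case: (T i \subset S).
  rewrite big1 // => i0 _; apply/eqP; rewrite eqb0; apply/negP => /familyP/(_ i).
  rewrite /Fi; case: (i == i0); rewrite !inE; [move/andP=>[_ E]|move/andP=>[_ E]];
   by rewrite E in Hi.
rewrite -sum1_card big_mkcond /=.
rewrite (eq_bigr (fun T => \sum_i0 (T \in family (Fi i0) : nat))); last first.
  by move=> T _; rewrite -pt; case: (T \in _).
rewrite exchange_big /=.
under eq_bigr => i0 _ do rewrite sum_ind.
rewrite (eq_bigr (fun i0 => (#|As| * (#|Bs| - #|As|) ^ n.-1)%N)).
  by rewrite sum_nat_const card_ord mulnA.
move=> i0 _; rewrite card_family foldrE big_map big_enum /=.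
rewrite (bigD1 i0) //= /Fi eqxx; congr (_ * _)%N.
rewrite (eq_bigr (fun _ => (#|Bs| - #|As|)%N)).
  by rewrite prod_nat_const cardC1 card_ord.
by move=> i /negbTE ->; rewrite cardsD (setIidPr AB).
Qed.
End Count.



Lemma swap n L : (\sum_(T in families n L) #|[set x : {ffun 'I_n -> bool} | NT T x == 1%N]|
  = \sum_(x : {ffun 'I_n -> bool}) #|[set T in families n L | NT T x == 1%N]|)%N.
Proof.
under eq_bigr => T _ do rewrite -sum_ind.
rewrite exchange_big /=; apply: eq_bigr => x _.
rewrite -sum_ind big_mkcond /=; apply: eq_bigr => T _; rewrite !inE.
by case: [forall i, #|T i| == L].
Qed.

Lemma cardF n L : #|families n L| = (#|BsD n L| ^ n)%N.
Proof.
have := @card_ffun_on 'I_n _ (BsD n L); rewrite card_ord => <-; apply: eq_card => T.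
rewrite /families !inE; apply/forallP/ffun_onP => H i; have := H i; by rewrite inE.
Qed.

Lemma good_bound n L (x : {ffun 'I_n -> bool}) : (12 <= L)%N -> n = (2 ^ L)%N ->
  (n <= 2 * kx x)%N -> (2 * L * (2 * kx x - n) <= n)%N ->
  (#|BsD n L|%:R ^+ n / 32 : rat) <= #|[set T in families n L | NT T x == 1%N]|%:R.
Proof.
move=> L12 hn hk hg.
rewrite count_x.
have ab : (#|AsD n L x| <= #|BsD n L|)%N.
  by apply: subset_leq_card; apply/subsetP => B; rewrite !inE => /andP[].
have ea : #|AsD n L x| = 'C(kx x, L) by rewrite cards_draws.
have eb : #|BsD n L| = 'C(n, L) by rewrite card_draws card_ord.
have hLL : (16 * L * L <= n)%N by rewrite hn pow_big.
have kn : (kx x <= n)%N by rewrite /kx -[X in (_ <= X)%N](card_ord n) max_card.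
have Lk : (L <= kx x)%N.
  move: (kx x) hk => k hk; clear -hk hLL L12; nia.
have Ln : (L <= n)%N by apply: leq_trans Lk kn.
have hL' : (2 * L * L + L < n)%N by clear -hLL L12; nia.
have b0 : (0 < #|BsD n L|)%N by rewrite eb bin_gt0.
have id : #|AsD n L x|%:R * \prod_(j < L) ((n - j)%:R : rat)
    = #|BsD n L|%:R * \prod_(j < L) ((kx x - j)%:R : rat).
  rewrite -!natr_prod -!natrM; congr (_%:R).
  rewrite -!ffact_prod ea eb -(bin_ffact n L) -(bin_ffact (kx x) L).
  exact: mulnCA.
have low := lower hk hL' hn.
have up := upper kn hk hg hn Lk.
have h1 := ratio_lo (prod_pos Ln) (ler0n _ _) id low.
have h2 := ratio_hi (prod_pos Ln) (ler0n _ _) id up.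
have hn4 : n = (4 * 2 ^ (L - 2))%N.
  by rewrite hn (_ : 4 = 2 ^ 2)%N // -expnD subnKC //; apply: leq_trans L12.
have m0 : (0 < 2 ^ (L - 2))%N by rewrite expn_gt0.
move: (#|AsD n L x|) (#|BsD n L|) ab b0 h1 h2 => a b ab b0 h1 h2.
rewrite hn4 in h1 h2.
have key := cnt_bound m0 b0 ab h1 h2.
rewrite -hn4 in key.
by rewrite natrM natrM natrX.
Qed.

Lemma final_arith (S t G bn : rat) : 0 < t -> 0 < bn -> t <= 4 * G ->
  G * (bn / 32) <= S -> 1/128 <= S / t / bn.
Proof.
move=> t0 b0 hG hS.
rewrite ler_pdivlMr; last exact b0.
rewrite ler_pdivlMr; last exact t0.
have h : bn * t <= bn * (4 * G) by apply: ler_wpM2l; [exact: ltW | exact hG].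
apply: le_trans hS.
rewrite (mulrCA bn 4 G) in h.
rewrite -(mulrA (1/128) bn t) (mulrA G bn) (mulrC G bn).
move: h; set u := bn * t; set v := bn * G => h.
lra.
Qed.

Lemma good_mass n L : (12 <= L)%N -> n = (2 ^ L)%N ->
  (2 ^ n)%:R <= 4 * #|[set x : {ffun 'I_n -> bool} |
        (n <= 2 * kx x)%N && (2 * L * (2 * kx x - n) <= n)%N]|%:R :> rat.
Proof.
move=> L12 hn.
set Good := [set x : {ffun 'I_n -> bool} | _].
set Hi := [set x : {ffun 'I_n -> bool} | (n <= 2 * kx x)%N].
set Bad := [set x : {ffun 'I_n -> bool} | (n < 2 * L * (2 * kx x - n))%N].
have hsub : Hi \subset Good :|: Bad.
  apply/subsetP => x; rewrite !inE => ->; rewrite /=.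
  by case: leqP.
have c1 : (#|Hi| <= #|Good| + #|Bad|)%N.
  apply: leq_trans (subset_leq_card hsub) _; exact: leq_card_setU.
have hh := half_mass n.
have n0 : (0 < n)%N by rewrite hn expn_gt0.
have ht := tail L n0.
have hLL : (16 * L * L <= n)%N by rewrite hn pow_big.
have L0 : (0 < L)%N by apply: leq_trans L12.
have hh' : ((2 ^ n)%N%:R : rat) <= 2 * #|Hi|%:R by rewrite -natrM ler_nat; exact: hh.
have c1' : (#|Hi|%:R : rat) <= #|Good|%:R + #|Bad|%:R by rewrite -natrD ler_nat.
move: hh' c1' ht hLL L0.
move: (#|Hi|) (#|Good|) (#|Bad|) (2 ^ n)%N => h g bb t hh' c1' ht hLL L0.
have hLL' : 16 * L%:R ^+ 2 <= (n%:R : rat).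
  by rewrite expr2 mulrA -natrM -natrM ler_nat.
have Lr0 : 0 < (L%:R : rat) by rewrite ltr0n.
have e1 : 16 * L%:R ^+ 2 * bb%:R <= n%:R * bb%:R :> rat by apply: ler_wpM2r.
have e2 : 16 * L%:R ^+ 2 * bb%:R <= 4 * L%:R ^+ 2 * t%:R :> rat by apply: le_trans e1 ht.
have q0 : 0 < (L%:R : rat) ^+ 2 by apply: exprn_gt0.
rewrite (mulrAC 16) (mulrAC 4) ler_pM2r in e2; last exact q0.
move: hh' c1' e2; clear.
move: (t%:R : rat) (h%:R : rat) (g%:R : rat) (bb%:R : rat) => T H G B.
move=> hs' E'; clear -hs' E'; lra.
Qed.

Lemma expect_bound n L : (12 <= L)%N -> n = (2 ^ L)%N -> 1/128 <= expectN1 n L.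
Proof.
move=> L12 hn.
have Ln : (L <= n)%N by rewrite hn; apply: ltnW; apply: ltn_expl.
have b0 : (0 < #|BsD n L|)%N by rewrite card_draws card_ord bin_gt0.
rewrite /expectN1 /probN1 -mulr_suml -natr_sum swap cardF.
apply: (final_arith (G := #|[set x : {ffun 'I_n -> bool} |
        (n <= 2 * kx x)%N && (2 * L * (2 * kx x - n) <= n)%N]|%:R)).
- by rewrite ltr0n expn_gt0.
- by rewrite ltr0n expn_gt0 b0.
- exact: good_mass.
rewrite natr_sum natrX.
set Good := [set x : {ffun 'I_n -> bool} | _].
have h : \sum_(x : {ffun 'I_n -> bool}) (if x \in Good then #|BsD n L|%:R ^+ n / 32 else 0)
   <= \sum_(x : {ffun 'I_n -> bool}) (#|[set T in families n L | NT T x == 1%N]|%:R : rat).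
  apply: ler_sum => x _; case: ifP => [hx | _]; last exact: ler0n.
  move: hx; rewrite inE => /andP [h1 h2]; exact: good_bound.
apply: le_trans h; rewrite -big_mkcond sumr_const mulr_natl; exact: lexx.
Qed.

Theorem mainTheorem3 :
  exists c : rat, 0 < c /\
  exists n0 : nat, forall n L : nat, (n0 <= n)%N -> n = (2 ^ L)%N ->
    c <= expectN1 n L /\
    exists T, T \in families n L /\ c <= probN1 T.
Proof.
exists (1/128); split; first lra.
exists (2 ^ 12)%N => n L hn0 hn.
have L12 : (12 <= L)%N by rewrite -(leq_exp2l _ _ (isT : (1 < 2)%N)) -hn; exact: hn0.
have E := expect_bound L12 hn.
split; first exact: E.
case: (boolP [exists T in families n L, 1/128 <= probN1 T]) => [/exists_inP [T TF HT] | /exists_inP H].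
  exists T; split; [exact: TF | exact: HT].
exfalso.
have H' : forall T, T \in families n L -> probN1 T < 1/128.
  move=> T TF; rewrite ltNge; apply/negP => h; apply: H; exists T.
  - exact: TF.
  - exact: h.
have Ln : (L <= n)%N by rewrite hn; apply: ltnW; apply: ltn_expl.
have b0 : (0 < #|BsD n L|)%N by rewrite card_draws card_ord bin_gt0.
have F0 : (0 < #|families n L|)%N by rewrite cardF expn_gt0 b0.
have [T0 T0F] := card_gt0P F0.
have hs : \sum_(T in families n L) probN1 T < \sum_(T in families n L) (1/128 : rat).
  apply: ltr_sum; last exact: H'.
  apply/hasP; exists T0; [exact: mem_index_enum | exact: T0F].
rewrite sumr_const -(mulr_natr (1/128)) in hs.
move: E; rewrite /expectN1 ler_pdivlMr; last (rewrite ltr0n; exact: F0).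
move: hs; move: (\sum_(T in families n L) probN1 T) (#|families n L|%:R : rat) => s f.
move=> hs' E'; clear -hs' E'; lra.
Qed.
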